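(* Let $x$ and $y$ be finite sequences of strings and $\lambda\ge0$. The tree $T^\ast$ built by $\textsc{BuildBifurcation}(x,y,\lambda)$ satisfies $\mathrm{error}_\lambda(T^\ast)\le\mathsf{EDG}(x,y,\lambda)$.
   Context: Strings are over a finite alphabet; $\varepsilon$ is the empty string and $\mathsf{ED}$ is Levenshtein edit distance (unit costs). $\mathsf{AED}(x,y)$ for string sequences is the minimum cost of transforming $x$ into $y$ using only inserting a string $w$ into $x$ (cost $\mathsf{ED}(w,\varepsilon)$) and substituting a string $w$ of $x$ by $w'$ (cost $\mathsf{ED}(w,w')$), with no deletions (defined only if $|x|\le|y|$). A labeled summary tree of $\{x,y\}$ is a rooted tree with a sentinel root, other nodes labeled by strings, with $x$ and $y$ assigned to nodes $v_x,v_y$; $L_T(v)$ is the label sequence on the root-to-$v$ path excluding the sentinel; $|T|$ counts non-sentinel nodes; $\mathrm{error}_\lambda(T)=\mathsf{AED}(x,L_T(v_x))+\mathsf{AED}(y,L_T(v_y))+\lambda|T|$. $\mathsf{EDG}(i,j,\lambda)$ ($1\le i\le|x|+1$, $1\le j\le|y|+1$): $\mathsf{EDG}(|x|+1,|y|+1,\lambda)=0$, $\mathsf{EDG}(i,|y|+1,\lambda)=\lambda(|x|-i+1)$, $\mathsf{EDG}(|x|+1,j,\lambda)=\lambda(|y|-j+1)$, and otherwise the minimum of $\mathsf{EDG}(i+1,j+1,\lambda)+\lambda+\mathsf{ED}(x_i,y_j)$, $\mathsf{EDG}(i,j+1,\lambda)+\lambda+\mathsf{ED}(\varepsilon,y_j)$,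 $\mathsf{EDG}(i+1,j,\lambda)+\lambda+\mathsf{ED}(x_i,\varepsilon)$, and $\lambda(|x|-i+1)+\lambda(|y|-j+1)$ (give up); $\mathsf{EDG}(x,y,\lambda)=\mathsf{EDG}(1,1,\lambda)$. $\textsc{BuildBifurcation}(x,y,\lambda)$ builds a tree recursively following an optimal choice in this recurrence: both empty gives the empty tree; insertion of $y_1$ (or $x$ empty) gives a node labeled $y_1$ above $\textsc{BuildBifurcation}(x,y_{2..|y|},\lambda)$; deletion of $x_1$ (or $y$ empty) gives a node labeled $x_1$ above $\textsc{BuildBifurcation}(x_{2..|x|},y,\lambda)$; substitution gives a node labeled $x_1$ above $\textsc{BuildBifurcation}(x_{2..|x|},y_{2..|y|},\lambda)$; give up places two disjoint paths labeled successively by the remaining strings of $x$ and of $y$. The sequence $x$ (resp. $y$) is mapped to the node created for its last string. *)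

(* Defs.v *)
From Stdlib Require Import ClassicalEpsilon.
From mathcomp Require Import all_boot all_order all_algebra.
Set Implicit Arguments. Unset Strict Implicit. Unset Printing Implicit Defensive.
Import Order.TTheory GRing.Theory Num.Theory.
Local Open Scope ring_scope.

Section Defs.
Variable A : finType.
Notation str := (seq A).
Notation strs := (seq (seq A)).

Fixpoint ED (s : str) : str -> nat :=
  match s with
  | [::] => fun t => size t
  | a :: s' => fix g (t : str) : nat :=
      match t with
      | [::] => size s
      | b :: t' => minn (minn (ED s' t' + (a != b)) (g t' + 1)) (ED s' t + 1)
      end
  end.

Inductive aed_step : strs -> strs -> nat -> Prop :=
| aed_ins (x : strs) (i : nat) (w : str) : (i <= size x)%N ->
    aed_step x (take i x ++ w :: drop i x) (ED w [::])
| aed_sub (x : strs) (i : nat) (w' : str) : (i < size x)%N ->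
    aed_step x (set_nth [::] x i w') (ED (nth [::] x i) w').

Inductive aed_reach : strs -> strs -> nat -> Prop :=
| aed_refl x : aed_reach x x 0
| aed_trans x z y c1 c2 : aed_step x z c1 -> aed_reach z y c2 ->
    aed_reach x y (c1 + c2).

Definition aedb (x y : strs) (c : nat) : bool :=
  if excluded_middle_informative (aed_reach x y c) then true else false.

Lemma aedb_ex x y : (exists c, aed_reach x y c) -> exists c, aedb x y c.
Proof.
case=> c Hc; exists c; rewrite /aedb.
by case: (excluded_middle_informative _).
Qed.

(* AED(x,y): minimum cost of such a transformation (0 if undefined,
   i.e. if no transformation exists, which happens iff |x| > |y|). *)
Definition AED (x y : strs) : nat :=
  match excluded_middle_informative (exists c, aed_reach x y c) with
  | left H => ex_minn (aedb_ex H)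
  | right _ => 0%N
  end.

(* Rooted labeled trees; the sentinel root is implicit: a labeled summary
   tree is a forest (children of the sentinel) plus the addresses of v_x and
   v_y (sequences of child indices from the sentinel; [::] = sentinel). *)
Inductive tree := Node of str & seq tree.

Definition dflt_tree := Node [::] [::].

(* label sequence L_T(v) along the root-to-v path, excluding the sentinel *)
Fixpoint lab (F : seq tree) (p : seq nat) : strs :=
  match p with
  | [::] => [::]
  | i :: p' => let: Node l ch := nth dflt_tree F i in l :: lab ch p'
  end.

Fixpoint tsize (t : tree) : nat :=
  let: Node _ ch := t in
  ((fix fsize (F : seq tree) : nat :=
     match F with [::] => 0%N | t :: F' => (tsize t + fsize F')%N end) ch).+1.

Definition fsize (F : seq tree) : nat := \sum_(t <- F) tsize t.

Record stree := STree { forest : seq tree; vx : seq nat; vy : seq nat }.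

Definition error (R : realFieldType) (lam : R) (x y : strs) (T : stree) : R :=
  (AED x (lab (forest T) (vx T)))%:R + (AED y (lab (forest T) (vy T)))%:R
  + lam * (fsize (forest T))%:R.

Variable R : realFieldType.

(* EDG on suffixes: EDG x y lam = EDG(1,1,lam) for sequences x, y *)
Fixpoint EDG (lam : R) (x : strs) : strs -> R :=
  match x with
  | [::] => fun y => lam * (size y)%:R
  | a :: x' => fix g (y : strs) : R :=
      match y with
      | [::] => lam * (size x)%:R
      | b :: y' =>
          Num.min (Num.min (EDG lam x' y' + lam + (ED a b)%:R)
                           (g y' + lam + (ED [::] b)%:R))
                  (Num.min (EDG lam x' (b :: y') + lam + (ED a [::])%:R)
                           (lam * (size x)%:R + lam * (size y)%:R))
      end
  end.

Fixpoint path_of (l : strs) : seq tree :=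
  match l with [::] => [::] | w :: l' => [:: Node w (path_of l')] end.

(* build lam x y T : T is a tree that BuildBifurcation(x,y,lam) can output,
   following an optimal choice of the recurrence (any optimal choice in
   case of ties). *)
Inductive build (lam : R) : strs -> strs -> stree -> Prop :=
| b_nil : build lam [::] [::] (STree [::] [::] [::])
| b_ins_empty b y' F px py : build lam [::] y' (STree F px py) ->
    build lam [::] (b :: y') (STree [:: Node b F] [::] (0%N :: py))
| b_del_empty a x' F px py : build lam x' [::] (STree F px py) ->
    build lam (a :: x') [::] (STree [:: Node a F] (0%N :: px) [::])
| b_ins a x' b y' F px py :
    EDG lam (a :: x') y' + lam + (ED [::] b)%:R = EDG lam (a :: x') (b :: y') ->
    build lam (a :: x') y' (STree F px py) ->
    build lam (a :: x') (b :: y') (STree [:: Node b F] (0%N :: px) (0%N :: py))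
| b_del a x' b y' F px py :
    EDG lam x' (b :: y') + lam + (ED a [::])%:R = EDG lam (a :: x') (b :: y') ->
    build lam x' (b :: y') (STree F px py) ->
    build lam (a :: x') (b :: y') (STree [:: Node a F] (0%N :: px) (0%N :: py))
| b_sub a x' b y' F px py :
    EDG lam x' y' + lam + (ED a b)%:R = EDG lam (a :: x') (b :: y') ->
    build lam x' y' (STree F px py) ->
    build lam (a :: x') (b :: y') (STree [:: Node a F] (0%N :: px) (0%N :: py))
| b_giveup a x' b y' :
    lam * (size (a :: x'))%:R + lam * (size (b :: y'))%:R
      = EDG lam (a :: x') (b :: y') ->
    build lam (a :: x') (b :: y')
      (STree (path_of (a :: x') ++ path_of (b :: y'))
             (0%N :: nseq (size x') 0%N) (1%N :: nseq (size y') 0%N)).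

End Defs.

(* Main.v *)
Require Import Defs.
From mathcomp Require Import all_boot all_order all_algebra.
From mathcomp Require Import lra.
From Stdlib Require Import ClassicalEpsilon.
Import Order.TTheory GRing.Theory Num.Theory.
Local Open Scope ring_scope.

Set Implicit Arguments.
Section Aux.
Variable A : finType.

Lemma ED_nil_l (t : seq A) : ED [::] t = size t.
Proof. by []. Qed.

Lemma ED_nil_r (t : seq A) : ED t [::] = size t.
Proof. by case: t. Qed.

Lemma ED_cons (a b : A) s t : ED (a :: s) (b :: t) =
  minn (minn (ED s t + (a != b)) (ED (a :: s) t + 1)) (ED s (b :: t) + 1).
Proof. by []. Qed.

Lemma ED_sym (s t : seq A) : ED s t = ED t s.
Proof.
elim: s t => [|a s IHs] t; first by rewrite ED_nil_r.
elim: t => [|b t IHt]; first by rewrite ED_nil_r.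
rewrite !ED_cons IHs IHt (IHs (b :: t)) eq_sym.
by rewrite -!minnA [X in minn _ X]minnC.
Qed.

Lemma step_lift (w : seq A) z z' c : aed_step z z' c -> aed_step (w :: z) (w :: z') c.
Proof.
case=> {z z' c} [z i u Hi | z i u Hi].
  by have := @aed_ins A (w :: z) i.+1 u Hi.
by have := @aed_sub A (w :: z) i.+1 u Hi.
Qed.

Lemma reach_lift (w : seq A) z y c : aed_reach z y c -> aed_reach (w :: z) (w :: y) c.
Proof.
elim=> [x|x z' y' c1 c2 Hs _ IH]; first exact: aed_refl.
exact: aed_trans (step_lift w Hs) IH.
Qed.

Lemma reach_ins (w : seq A) z y c : aed_reach z y c ->
  aed_reach z (w :: y) (size w + c).
Proof.
move=> H; rewrite -(ED_nil_r w).
have S : aed_step z (w :: z) (ED w [::]).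
  by have := @aed_ins A z 0 w (leq0n _); rewrite take0 drop0.
exact: aed_trans S (reach_lift w H).
Qed.

Lemma reach_sub (w w' : seq A) z y c : aed_reach z y c ->
  aed_reach (w :: z) (w' :: y) (ED w w' + c).
Proof.
move=> H.
have S : aed_step (w :: z) (w' :: z) (ED w w').
  by have := @aed_sub A (w :: z) 0 w' (ltn0Sn _).
exact: aed_trans S (reach_lift w' H).
Qed.

Lemma AED_le (x y : seq (seq A)) c : aed_reach x y c -> (AED x y <= c)%N.
Proof.
move=> H; rewrite /AED; case: excluded_middle_informative => [E|E]; last by [].
case: ex_minnP => m _ Hm; apply: Hm.
by rewrite /aedb; case: excluded_middle_informative.
Qed.

Lemma tsizeE (w : seq A) F : Defs.tsize (Node w F) = (fsize F).+1.
Proof.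
rewrite /fsize /=; congr S.
by elim: F => [|t F IH]; rewrite ?big_nil // big_cons IH.
Qed.

Lemma fsize_path (l : seq (seq A)) : fsize (path_of l) = size l.
Proof.
elim: l => [|w l IH]; first by rewrite /fsize big_nil.
by rewrite /fsize /= big_cons big_nil tsizeE IH addn0.
Qed.

Lemma lab_path (l : seq (seq A)) G :
  lab (path_of l ++ G) (nseq (size l) 0%N) = l.
Proof.
elim: l G => [|w l IH] G //=.
by rewrite -(cats0 (path_of l)) IH.
Qed.

Lemma fsize1 (w : seq A) F : fsize [:: Node w F] = (fsize F).+1.
Proof. by rewrite /fsize big_cons big_nil tsizeE addn0. Qed.

Lemma EDG_nil_r (R : realFieldType) (lam : R) (x : seq (seq A)) :
  EDG lam x [::] = lam * (size x)%:R.
Proof. by case: x. Qed.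

Lemma natS' (R : realFieldType) n : (n.+1)%:R = n%:R + 1 :> R.
Proof. by rewrite -addn1 natrD. Qed.

Lemma main (R : realFieldType) (lam : R) (x y : seq (seq A)) T : build lam x y T ->
  exists c1 c2, aed_reach x (lab (forest T) (vx T)) c1 /\
    aed_reach y (lab (forest T) (vy T)) c2 /\
    c1%:R + c2%:R + lam * (fsize (forest T))%:R <= EDG lam x y.
Proof.
elim=> {x y T}.
- exists 0%N, 0%N; split; [exact: aed_refl|split; [exact: aed_refl|]].
  by rewrite /fsize big_nil /= !mulr0 !addr0.
- move=> b y' F px py _ [c1 [c2 [H1 [H2 /= Hle]]]].
  exists 0%N, c2; split; first exact: aed_refl.
  split; first exact: reach_lift.
  rewrite fsize1 /= !natS' mulrDr mulr1.
  have : 0 <= (c1%:R : R) by rewrite ler0n.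
  lra.
- move=> a x' F px py _ [c1 [c2 [H1 [H2 Hle]]]].
  exists c1, 0%N; split; first exact: reach_lift.
  split; first exact: aed_refl.
  rewrite EDG_nil_r /= in Hle; rewrite EDG_nil_r.
  rewrite fsize1 /= !natS' mulrDr mulr1.
  have : 0 <= (c2%:R : R) by rewrite ler0n.
  lra.
- move=> a x' b y' F px py E _ [c1 [c2 [H1 [H2 Hle]]]].
  have {}Hle : c1%:R + c2%:R + lam * (fsize F)%:R <= EDG lam (a :: x') y' := Hle.
  exists (size b + c1)%N, c2; split; first exact: reach_ins.
  split; first exact: reach_lift.
  rewrite -E [forest _]/= fsize1 natS' !natrD mulrDr mulr1.
  lra.
- move=> a x' b y' F px py E _ [c1 [c2 [H1 [H2 Hle]]]].
  have {}Hle : c1%:R + c2%:R + lam * (fsize F)%:R <= EDG lam x' (b :: y') := Hle.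
  exists c1, (size a + c2)%N; split; first exact: reach_lift.
  split; first exact: reach_ins.
  rewrite -E [forest _]/= fsize1 natS' !natrD mulrDr mulr1 ED_nil_r.
  lra.
- move=> a x' b y' F px py E _ [c1 [c2 [H1 [H2 Hle]]]].
  have {}Hle : c1%:R + c2%:R + lam * (fsize F)%:R <= EDG lam x' y' := Hle.
  exists c1, (ED b a + c2)%N; split; first exact: reach_lift.
  split; first exact: reach_sub.
  rewrite -E [forest _]/= fsize1 natS' !natrD mulrDr mulr1 (ED_sym b a).
  lra.
- move=> a x' b y' E.
  exists 0%N, 0%N; split.
    rewrite /=. rewrite -(cats0 (path_of x')) lab_path; exact: aed_refl.
  split.
    rewrite /=. rewrite -(cats0 (path_of y')) lab_path; exact: aed_refl.
  rewrite -E /fsize big_cat -/(fsize _) -/(fsize _) !fsize_path /= natrD.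
  rewrite mulrDr !add0r; lra.
Qed.

End Aux.

Theorem lemma9 (A : finType) (R : realFieldType) (lam : R)
    (x y : seq (seq A)) (T : stree A) :
  0 <= lam -> build lam x y T -> error lam x y T <= EDG lam x y.
Proof.
move=> _ /main [c1 [c2 [H1 [H2 /= Hle]]]].
rewrite /error; apply: le_trans Hle.
by rewrite lerD2r lerD // ler_nat; apply: AED_le.
Qed.
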